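(* Consider the cone percolation process on $\mathbb{T}_d$ ($d\ge2$) with $R$ binomial: $\mathbb{P}(R=k)=\binom{n}{k}p^k(1-p)^{n-k}$, $k=0,1,\dots,n$, where $n\ge1$ and $p\in(0,1)$. If $(pd+1-p)^n-(1-p)^n>1$ then $\mathbb{P}[V]>0$; if $2d-d(pd+1-p)^n\ge 1$ then $\mathbb{P}[V]=0$.
   Context: Let $d\ge 2$ and let $\mathbb{T}_d$ be the infinite tree in which every vertex has exactly $d+1$ neighbours. Fix a vertex $\mathcal{O}$ (the origin); $d(u,v)$ denotes graph distance. Write $u\le v$ if $u$ lies on the path from $\mathcal{O}$ to $v$ (so $\mathcal{O}\le v$ for all $v$). Let $R$ be a random variable with values in $\{0,1,2,\dots\}$. Cone percolation on $\mathbb{T}_d$: to each vertex $u$ attach an independent copy $R_u$ of $R$; let $B_u=\{v: u\le v,\ d(u,v)\le R_u\}$; set $I_0=\{\mathcal{O}\}$, $I_{n+1}=\bigcup_{u\in I_n}B_u$, $I=\bigcup_{n\ge0}I_n$, and let $V=\{|I|=\infty\}$; $\mathbb{P}$ is the probability measure of this process. *)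

(* Defs.v *)
From Stdlib Require Import Reals Lra Lia Arith List Classical ClassicalEpsilon.
Import ListNotations.
Open Scope R_scope.

(** Vertices of T_d: a vertex is the list of child indices along the path
    from the origin O = [].  The origin has d+1 children (indices 0..d),
    every other vertex has d children (indices 0..d-1), so every vertex has
    exactly d+1 neighbours. *)
Definition vertex := list nat.

Definition valid (d : nat) (v : vertex) : Prop :=
  match v with
  | [] => True
  | a :: w => (a <= d)%nat /\ Forall (fun i => (i < d)%nat) w
  end.

(** u <= v  iff  u is a prefix of v  (v = u ++ w); then d(u,v) = length w. *)

(** A configuration assigns to every vertex u its radius R_u. *)
Definition config := vertex -> nat.

(** The infected set I = union of the I_k: least set containing O and
    closed under  u in I, v in B_u = {v : u <= v, d(u,v) <= R_u}  ==>  v in I. *)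
Inductive infected (d : nat) (om : config) : vertex -> Prop :=
| inf_root : infected d om []
| inf_step : forall u w, infected d om u -> valid d (u ++ w) ->
    (length w <= om u)%nat -> infected d om (u ++ w).

(** The event V = {|I| = infinity}: I is not contained in any finite list. *)
Definition percolates (d : nat) (om : config) : Prop :=
  ~ exists l : list vertex, forall v, infected d om v -> In v l.

Definition children (d : nat) (v : vertex) : list vertex :=
  match v with
  | [] => map (fun i => [i]) (seq 0 (S d))
  | _ => map (fun i => v ++ [i]) (seq 0 d)
  end.

Fixpoint level (d : nat) (k : nat) : list vertex :=
  match k with
  | O => [ [] ]
  | S m => flat_map (children d) (level d m)
  end.

Fixpoint ball (d : nat) (N : nat) : list vertex :=
  match N with
  | O => []
  | S m => ball d m ++ level d m
  end.

Definition binom_pmf (n : nat) (p : R) (k : nat) : R :=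
  C n k * p ^ k * (1 - p) ^ (n - k).

Definition ind (P : Prop) : R :=
  if excluded_middle_informative P then 1 else 0.

Definition upd (om : config) (v : vertex) (k : nat) : config :=
  fun u => if list_eq_dec Nat.eq_dec u v then k else om u.

(** Integral of the indicator of Q against the product of Binomial(n,p)
    laws on the radii of the vertices listed in vs (the other radii are
    those of om). *)
Fixpoint integ (n : nat) (p : R) (vs : list vertex)
    (Q : config -> Prop) (om : config) : R :=
  match vs with
  | [] => ind (Q om)
  | v :: vs' => sum_f_R0 (fun k => binom_pmf n p k * integ n p vs' Q (upd om v k)) n
  end.

(** The "depth-N cylinder hull" of an event A: configurations that agree on
    the ball of depth < N with some configuration in A whose radii all lie
    in the support {0,...,n} of R. *)
Definition cyl_hull (d n N : nat) (A : config -> Prop) (om : config) : Prop :=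
  exists om', (forall v, valid d v -> (om' v <= n)%nat) /\
              (forall v, In v (ball d N) -> om' v = om v) /\ A om'.

(** Probability (under the product law of i.i.d. Binomial(n,p) radii) of
    the depth-N cylinder hull of A.  For a closed event A (such as V) these
    values decrease in N to P[A]. *)
Definition cyl_prob (d n : nat) (p : R) (A : config -> Prop) (N : nat) : R :=
  integ n p (ball d N) (cyl_hull d n N A) (fun _ => 0%nat).

(* Main.v *)
Require Import Defs.
From Stdlib Require Import Reals.
From Stdlib Require Import Lra Lia Arith List Classical ClassicalEpsilon Permutation FunctionalExtensionality.
Import ListNotations.
Open Scope R_scope.

Lemma sum_mult_l (c : R) (f : nat -> R) (N : nat) :
  c * sum_f_R0 f N = sum_f_R0 (fun i => c * f i) N.
Proof. induction N; simpl; [ring|rewrite <- IHN; ring]. Qed.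

Lemma sum_swap (f : nat -> nat -> R) (N M : nat) :
  sum_f_R0 (fun i => sum_f_R0 (fun j => f i j) M) N =
  sum_f_R0 (fun j => sum_f_R0 (fun i => f i j) N) M.
Proof.
  induction N; simpl.
  - reflexivity.
  - rewrite IHN. rewrite <- sum_plus. reflexivity.
Qed.

Lemma C_nonneg n k : 0 <= C n k.
Proof.
  unfold C. apply Rmult_le_pos.
  - apply pos_INR.
  - apply Rlt_le, Rinv_0_lt_compat, Rmult_lt_0_compat; apply lt_0_INR, lt_O_fact.
Qed.

Lemma pmf_nonneg n p k : 0 <= p <= 1 -> 0 <= binom_pmf n p k.
Proof.
  intros Hp. unfold binom_pmf. apply Rmult_le_pos; [apply Rmult_le_pos|].
  - apply C_nonneg.
  - apply pow_le; lra.
  - apply pow_le; lra.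
Qed.

Lemma pmf_sum n p : sum_f_R0 (fun k => binom_pmf n p k) n = 1.
Proof.
  unfold binom_pmf. rewrite <- binomial. replace (p + (1 - p)) with 1 by ring. apply pow1.
Qed.

Lemma pmf_sum_c n p (c : R) : sum_f_R0 (fun k => binom_pmf n p k * c) n = c.
Proof.
  rewrite <- scal_sum, pmf_sum. ring.
Qed.

Fixpoint E (n : nat) (p : R) (vs : list vertex) (F : config -> R) (om : config) : R :=
  match vs with
  | [] => F om
  | v :: vs' => sum_f_R0 (fun k => binom_pmf n p k * E n p vs' F (upd om v k)) n
  end.

Lemma integ_E n p vs Q om : integ n p vs Q om = E n p vs (fun o => Defs.ind (Q o)) om.
Proof.
  revert om; induction vs; simpl; intros; auto.
  apply sum_eq; intros; rewrite IHvs; auto.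
Qed.

Lemma E_ext n p vs F G om : (forall o, F o = G o) -> E n p vs F om = E n p vs G om.
Proof.
  intros H; revert om; induction vs; simpl; intros; auto.
  apply sum_eq; intros; rewrite IHvs; auto.
Qed.

Lemma E_ext_gen n p vs F G om :
  (forall o, (forall v, ~ In v vs -> o v = om v) -> (forall v, In v vs -> (o v <= n)%nat) -> F o = G o) ->
  E n p vs F om = E n p vs G om.
Proof.
  revert om; induction vs as [|a vs IH]; simpl; intros om H.
  - apply H; simpl; tauto.
  - apply sum_eq; intros i Hi. f_equal. apply IH.
    intros o H1 H2. apply H.
    + intros v Hv. rewrite H1 by tauto. unfold upd.
      destruct (list_eq_dec Nat.eq_dec v a); [subst; tauto|auto].
    + intros v Hv.
      destruct (in_dec (list_eq_dec Nat.eq_dec) v vs) as [Hin|Hnin]; auto.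
      assert (v = a) by (destruct Hv; [auto|tauto]). subst.
      rewrite H1 by auto. unfold upd. destruct (list_eq_dec Nat.eq_dec a a); [auto|congruence].
Qed.

Lemma E_lin n p vs F a b om :
  E n p vs (fun o => a + b * F o) om = a + b * E n p vs F om.
Proof.
  revert om; induction vs; simpl; intros; auto.
  rewrite (sum_eq _ (fun k => binom_pmf n p k * a + b * (binom_pmf n p k * E n p vs F (upd om a0 k)))).
  - rewrite sum_plus, pmf_sum_c, <- sum_mult_l. ring.
  - intros; rewrite IHvs; ring.
Qed.

Lemma E_const n p vs c om : E n p vs (fun _ => c) om = c.
Proof.
  rewrite (E_ext _ _ _ _ (fun o => c + 0 * (fun _ => 0) o)) by (intros; ring).
  rewrite E_lin; ring.
Qed.

Lemma E_app n p l1 l2 F om : E n p (l1 ++ l2) F om = E n p l1 (E n p l2 F) om.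
Proof.
  revert om; induction l1; simpl; intros; auto.
  apply sum_eq; intros; rewrite IHl1; auto.
Qed.

Lemma upd_upd_same om v k j : upd (upd om v k) v j = upd om v j.
Proof.
  apply functional_extensionality; intro u; unfold upd.
  destruct (list_eq_dec Nat.eq_dec u v); auto.
Qed.

Lemma upd_comm om x y k j : x <> y -> upd (upd om y k) x j = upd (upd om x j) y k.
Proof.
  intros Hxy; apply functional_extensionality; intro u; unfold upd.
  destruct (list_eq_dec Nat.eq_dec u x); destruct (list_eq_dec Nat.eq_dec u y); subst; auto; congruence.
Qed.

Lemma E_dup n p v l F om : E n p (v :: v :: l) F om = E n p (v :: l) F om.
Proof.
  simpl.
  rewrite (sum_eq _ (fun k => binom_pmf n p k * sum_f_R0 (fun j => binom_pmf n p j * E n p l F (upd om v j)) n)).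
  - rewrite <- scal_sum. rewrite pmf_sum. ring.
  - intros. f_equal. apply sum_eq; intros. rewrite upd_upd_same. auto.
Qed.

Lemma E_swap n p x y l F om : E n p (y :: x :: l) F om = E n p (x :: y :: l) F om.
Proof.
  destruct (list_eq_dec Nat.eq_dec x y) as [<-|Hxy]; auto.
  simpl.
  rewrite (sum_eq _ (fun k => sum_f_R0 (fun j => binom_pmf n p k * (binom_pmf n p j * E n p l F (upd (upd om x j) y k))) n)).
  2:{ intros. rewrite sum_mult_l. apply sum_eq; intros. rewrite upd_comm; auto. }
  rewrite sum_swap. apply sum_eq; intros. rewrite sum_mult_l. apply sum_eq; intros. ring.
Qed.

Lemma E_perm n p l1 l2 : Permutation l1 l2 -> forall F om, E n p l1 F om = E n p l2 F om.
Proof.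
  induction 1; intros F om; auto.
  - simpl; apply sum_eq; intros; rewrite IHPermutation; auto.
  - apply E_swap.
  - rewrite IHPermutation1; auto.
Qed.

Lemma E_absorb n p v l F om : In v l -> E n p (v :: l) F om = E n p l F om.
Proof.
  intros Hin. destruct (in_split _ _ Hin) as (l1 & l2 & ->).
  assert (Hp : Permutation (l1 ++ v :: l2) (v :: l1 ++ l2)) by (symmetry; apply Permutation_middle).
  rewrite (E_perm _ _ _ _ (perm_skip v Hp)). rewrite E_dup. symmetry; apply E_perm; auto.
Qed.

Lemma E_nodup n p l F om : E n p l F om = E n p (nodup (list_eq_dec Nat.eq_dec) l) F om.
Proof.
  revert om; induction l as [|a l IH]; intros om; simpl; auto.
  destruct (in_dec (list_eq_dec Nat.eq_dec) a l).
  - rewrite <- IH. apply (E_absorb n p a l F om i).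
  - simpl. apply sum_eq; intros; rewrite IH; auto.
Qed.

Lemma E_set n p l l' F om : (forall x, In x l <-> In x l') -> E n p l F om = E n p l' F om.
Proof.
  intros H. rewrite (E_nodup _ _ l), (E_nodup _ _ l'). apply E_perm.
  apply NoDup_Permutation; try apply NoDup_nodup.
  intros x; rewrite !nodup_In; auto.
Qed.

Definition dep (S : vertex -> Prop) (F : config -> R) :=
  forall o o', (forall v, S v -> o v = o' v) -> F o = F o'.

Lemma dep_upd S o o' v k : (forall u, S u -> o u = o' u) -> forall u, S u -> upd o v k u = upd o' v k u.
Proof. intros H u Hu; unfold upd; destruct (list_eq_dec Nat.eq_dec u v); auto. Qed.

Lemma E_dep n p vs S F : dep S F -> dep S (E n p vs F).
Proof.
  intros H; induction vs; simpl; intros o o' Ho; auto.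
  apply sum_eq; intros; f_equal. apply IHvs. apply dep_upd; auto.
Qed.

Lemma dep_upd_out S F o v k : dep S F -> ~ S v -> F (upd o v k) = F o.
Proof.
  intros H Hv. apply H. intros u Hu; unfold upd.
  destruct (list_eq_dec Nat.eq_dec u v); subst; tauto.
Qed.

Lemma E_factor n p vs S F H om : dep S H -> (forall v, In v vs -> ~ S v) ->
  E n p vs (fun o => F o * H o) om = E n p vs F om * H om.
Proof.
  intros HH; revert om; induction vs as [|a vs IH]; simpl; intros om Hd; auto.
  rewrite Rmult_comm, scal_sum. apply sum_eq; intros.
  rewrite IH by auto. rewrite (dep_upd_out S H) by auto. ring.
Qed.

Lemma E_prod n p l1 l2 S1 S2 F G om : dep S1 F -> dep S2 G ->
  (forall v, In v l1 -> ~ S2 v) -> (forall v, In v l2 -> ~ S1 v) ->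
  E n p (l1 ++ l2) (fun o => F o * G o) om = E n p l1 F om * E n p l2 G om.
Proof.
  intros HF HG H1 H2. rewrite E_app.
  rewrite (E_ext _ _ _ _ (fun o => F o * E n p l2 G o)).
  - apply E_factor with S2; auto. apply E_dep; auto.
  - intros o. rewrite (E_ext _ _ _ _ (fun o => G o * F o)) by (intros; ring).
    rewrite (E_factor _ _ _ S1); auto. ring.
Qed.

Lemma ind_true (P : Prop) : P -> Defs.ind P = 1.
Proof. intros H; unfold Defs.ind; destruct (excluded_middle_informative P); tauto. Qed.
Lemma ind_false (P : Prop) : ~ P -> Defs.ind P = 0.
Proof. intros H; unfold Defs.ind; destruct (excluded_middle_informative P); tauto. Qed.
Lemma ind_iff (P Q : Prop) : (P <-> Q) -> Defs.ind P = Defs.ind Q.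
Proof.
  intros H; unfold Defs.ind; destruct (excluded_middle_informative P); destruct (excluded_middle_informative Q); tauto.
Qed.
Lemma ind_or (P Q : Prop) : Defs.ind (P \/ Q) = 1 - (1 - Defs.ind P) * (1 - Defs.ind Q).
Proof.
  unfold Defs.ind; destruct (excluded_middle_informative (P \/ Q));
  destruct (excluded_middle_informative P); destruct (excluded_middle_informative Q); try ring; tauto.
Qed.


Fixpoint reach (d : nat) (v : vertex) (r k : nat) (om : config) : Prop :=
  match k with
  | O => True
  | S k' => (1 <= Nat.max r (om v))%nat /\
            exists i, (i < d)%nat /\ reach d (v ++ [i]) (Nat.max r (om v) - 1) k' om
  end.

Definition reachRoot (d N : nat) (om : config) : Prop :=
  match N with
  | O => True
  | S k => (1 <= om [])%nat /\ exists i, (i <= d)%nat /\ reach d [i] (om [] - 1) k om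
  end.

Fixpoint sub (d : nat) (v : vertex) (k : nat) : list vertex :=
  match k with
  | O => []
  | S k' => v :: flat_map (fun i => sub d (v ++ [i]) k') (seq 0 d)
  end.

Definition rootlist (d N : nat) : list vertex :=
  match N with
  | O => []
  | S k => [] :: flat_map (fun i => sub d [i] k) (seq 0 (S d))
  end.

Fixpoint wk (om : config) (v : vertex) (r : nat) (w : list nat) : option nat :=
  match w with
  | [] => Some r
  | i :: w' => if (1 <=? Nat.max r (om v))%nat then wk om (v ++ [i]) (Nat.max r (om v) - 1) w' else None
  end.

Lemma sub_in d v k x : In x (sub d v k) <->
  exists w, x = v ++ w /\ (length w < k)%nat /\ Forall (fun i => (i < d)%nat) w.
Proof.
  revert v; induction k; intros v; simpl.
  - split; [tauto|]. intros (w & _ & H & _); lia.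
  - rewrite in_flat_map. split.
    + intros [<-|(i & Hi & Hx)].
      * exists []; rewrite app_nil_r; split; [auto|split; [simpl; lia|constructor]].
      * apply IHk in Hx as (w & -> & Hl & Hf). apply in_seq in Hi.
        exists (i :: w). rewrite <- app_assoc. simpl. split; [auto|split; [simpl; lia|constructor; auto; lia]].
    + intros ([|i w] & -> & Hl & Hf).
      * left; rewrite app_nil_r; auto.
      * right. inversion Hf; subst. exists i. split; [apply in_seq; lia|].
        apply IHk. exists w. rewrite <- app_assoc. simpl. repeat split; auto. simpl in Hl; lia.
Qed.

Lemma valid_prefix d a b : valid d (a ++ b) -> valid d a.
Proof.
  destruct a as [|x a]; simpl; auto. intros [H1 H2]; split; auto.
  apply Forall_app in H2; tauto.
Qed.

Lemma valid_snoc d y i : valid d y -> (i < d)%nat -> valid d (y ++ [i]).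
Proof.
  destruct y as [|x y]; simpl; intros; [split; [lia|constructor]|]. destruct H; split; auto.
  apply Forall_app; split; auto.
Qed.

Lemma rootlist_in d N x : In x (rootlist d N) <-> valid d x /\ (length x < N)%nat.
Proof.
  destruct N as [|k]; unfold rootlist; cbn [In].
  - split; [tauto|simpl; lia].
  - rewrite in_flat_map. split.
    + intros [<-|(i & Hi & Hx)]; [simpl; split; auto; lia|].
      apply sub_in in Hx as (w & -> & Hl & Hf). apply in_seq in Hi. simpl. split; [split; auto; lia| lia].
    + intros [Hv Hl]. destruct x as [|i w]; [auto|right].
      destruct Hv as [Hi Hf]. exists i. split; [apply in_seq; lia|].
      apply sub_in. exists w. simpl in Hl. split; [auto|split;[lia|auto]].
Qed.

Lemma level_in d k x : In x (level d k) <-> valid d x /\ length x = k.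
Proof.
  revert x; induction k; intros x; cbn [level].
  - split; [intros [<-|[]]; simpl; auto|]. intros [_ H]. destruct x; simpl in *; auto; lia.
  - rewrite in_flat_map. split.
    + intros (y & Hy & Hx). apply IHk in Hy as [Hv Hl].
      destruct y as [|a w]; unfold children in Hx; apply in_map_iff in Hx as (i & <- & Hi); apply in_seq in Hi.
      * simpl in *; split; [split; [lia|constructor]|lia].
      * split; [apply (valid_snoc d (a :: w)); auto; lia|]. rewrite length_app; simpl in *; lia.
    + intros [Hv Hl]. assert (Hne : x <> []) by (intros ->; simpl in Hl; lia).
      destruct (exists_last Hne) as (y & i & ->).
      exists y. rewrite length_app in Hl; simpl in Hl.
      split; [apply IHk; split; [apply (valid_prefix d y [i]); auto|lia]|].
      destruct y as [|a w]; unfold children.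
      * apply in_map_iff. exists i; split; auto. simpl in Hv. apply in_seq; lia.
      * apply in_map_iff. exists i; split; auto. apply in_seq. simpl in Hv.
        destruct Hv as [_ Hf]. apply Forall_app in Hf as [_ Hf]. inversion Hf; lia.
Qed.

Lemma ball_in d N x : In x (ball d N) <-> valid d x /\ (length x < N)%nat.
Proof.
  induction N; simpl.
  - split; [tauto|lia].
  - rewrite in_app_iff, IHN, level_in. split.
    + intros [[]|[]]; split; auto; lia.
    + intros [Hv Hl]. destruct (Nat.eq_dec (length x) N); [right|left]; split; auto; lia.
Qed.

Lemma ball_rootlist d N x : In x (ball d N) <-> In x (rootlist d N).
Proof. rewrite ball_in, rootlist_in; tauto. Qed.


Lemma wk_cons om v r i w : wk om v r (i :: w) =
  if (1 <=? Nat.max r (om v))%nat then wk om (v ++ [i]) (Nat.max r (om v) - 1) w else None.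
Proof. reflexivity. Qed.

Lemma reach_wk d k v r om : reach d v r k om <->
  exists w, length w = k /\ Forall (fun i => (i < d)%nat) w /\ wk om v r w <> None.
Proof.
  revert v r; induction k; intros v r; simpl.
  - split; [intros _; exists []; simpl; repeat split; auto; congruence|auto].
  - split.
    + intros [H1 (i & Hi & Hr)]. apply IHk in Hr as (w & Hl & Hf & Hw).
      exists (i :: w). split; [simpl; lia|]. split; [constructor; auto|].
      rewrite wk_cons. destruct (Nat.leb_spec 1 (Nat.max r (om v))); [exact Hw|lia].
    + intros ([|i w] & Hl & Hf & Hw); [simpl in Hl; lia|].
      rewrite wk_cons in Hw. inversion Hf; subst.
      destruct (Nat.leb_spec 1 (Nat.max r (om v))); [|congruence].
      split; auto. exists i; split; auto. apply IHk. exists w; simpl in Hl; repeat split; auto.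
Qed.

Lemma reachRoot_wk d N om : reachRoot d N om <->
  exists x, length x = N /\ valid d x /\ wk om [] 0 x <> None.
Proof.
  destruct N as [|k]; simpl.
  - split; [intros _; exists []; simpl; repeat split; auto; congruence|auto].
  - split.
    + intros [H1 (i & Hi & Hr)]. apply reach_wk in Hr as (w & Hl & Hf & Hw).
      exists (i :: w). split; [simpl; lia|]. split; [simpl; auto|].
      rewrite wk_cons, Nat.max_0_l. destruct (Nat.leb_spec 1 (om [])); [exact Hw|lia].
    + intros ([|i w] & Hl & Hv & Hw); [simpl in Hl; lia|].
      rewrite wk_cons in Hw. simpl in Hv. rewrite Nat.max_0_l in Hw. destruct Hv as [Hi Hf].
      destruct (Nat.leb_spec 1 (om [])); [|congruence].
      split; auto. exists i; split; auto. apply reach_wk. exists w; simpl in Hl; repeat split; auto.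
Qed.

Lemma wk_app om v r w1 w2 : wk om v r (w1 ++ w2) =
  match wk om v r w1 with Some s => wk om (v ++ w1) s w2 | None => None end.
Proof.
  revert v r; induction w1 as [|i w1 IH]; intros v r.
  - simpl. rewrite app_nil_r; auto.
  - change ((i :: w1) ++ w2) with (i :: (w1 ++ w2)). rewrite !wk_cons.
    destruct (1 <=? Nat.max r (om v))%nat; auto. rewrite IH. rewrite <- app_assoc. auto.
Qed.

Lemma wk_long om w v r : (length w <= Nat.max r (om v))%nat -> wk om v r w <> None.
Proof.
  revert v r; induction w as [|i w IH]; intros v r H; [simpl; congruence|].
  rewrite wk_cons. simpl in H. destruct (Nat.leb_spec 1 (Nat.max r (om v))); [|lia].
  apply IH. lia.
Qed.

Lemma infected_valid d om x : infected d om x -> valid d x.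
Proof. induction 1; simpl; auto. Qed.

Lemma infected_wk d om x : infected d om x -> wk om [] 0 x <> None.
Proof.
  induction 1; simpl; [congruence|].
  rewrite wk_app. destruct (wk om [] 0 u) as [s|]; [|congruence].
  simpl. apply wk_long. lia.
Qed.

Lemma wk_infected d om w : forall v r,
  (exists u w0, v = u ++ w0 /\ infected d om u /\ (length w0 + r <= om u)%nat) ->
  valid d (v ++ w) -> wk om v r w <> None -> infected d om (v ++ w).
Proof.
  induction w as [|i w IH]; intros v r (u & w0 & -> & Hu & Hl) Hv Hw.
  - rewrite app_nil_r in *. apply inf_step; auto. lia.
  - rewrite wk_cons in Hw. destruct (Nat.leb_spec 1 (Nat.max r (om (u ++ w0)))) as [Hm|]; [|congruence].
    replace ((u ++ w0) ++ i :: w) with (((u ++ w0) ++ [i]) ++ w) by (rewrite <- !app_assoc; auto).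
    apply (IH _ (Nat.max r (om (u ++ w0)) - 1)%nat); [| rewrite <- !app_assoc; simpl; rewrite <- app_assoc in Hv; auto | auto].
    destruct (Nat.le_ge_cases r (om (u ++ w0))) as [Hc|Hc].
    + rewrite Nat.max_r in * by auto. exists (u ++ w0), [i]. split; auto. split; [|simpl; lia].
      apply inf_step; auto; [|lia]. apply (valid_prefix d _ (i :: w)); auto.
    + rewrite Nat.max_l in * by auto. exists u, (w0 ++ [i]). split; [rewrite app_assoc; auto|].
      split; auto. rewrite length_app; simpl; lia.
Qed.

Lemma wk_infected_root d om x : valid d x -> wk om [] 0 x <> None -> infected d om x.
Proof.
  intros Hv Hw. apply (wk_infected d om x [] 0); auto.
  exists [], []. simpl. split; auto. split; [constructor|lia].
Qed.

Lemma wk_dep om om' w : forall v r,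
  (forall y, (length y < length v + length w)%nat -> om y = om' y) -> wk om v r w = wk om' v r w.
Proof.
  induction w as [|i w IH]; intros v r H; auto. rewrite !wk_cons.
  rewrite (H v) by (simpl; lia). destruct (1 <=? _)%nat; auto.
  apply IH. intros y Hy; apply H. rewrite length_app in Hy; simpl in *; lia.
Qed.

Lemma wk_dep_valid d om om' w : forall v r,
  (forall y, valid d y -> (length y < length v + length w)%nat -> om y = om' y) ->
  valid d (v ++ w) -> wk om v r w = wk om' v r w.
Proof.
  induction w as [|i w IH]; intros v r H Hv; auto. rewrite !wk_cons.
  rewrite (H v) by (try (apply (valid_prefix d v (i :: w)); auto); simpl; lia).
  destruct (1 <=? _)%nat; auto.
  apply IH.
  - intros y Hy1 Hy; apply H; auto. rewrite length_app in Hy; simpl in *; lia.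
  - rewrite <- app_assoc; auto.
Qed.

Definition bnd (n : nat) (om : config) := forall v, (om v <= n)%nat.

Lemma hull_iff d n N om : (2 <= d)%nat -> (1 <= n)%nat -> bnd n om ->
  (cyl_hull d n N (percolates d) om <-> reachRoot d N om).
Proof.
  intros Hd Hn Hb. rewrite reachRoot_wk. split.
  - intros (om' & H1 & H2 & H3).
    assert (Hex : exists x, infected d om' x /\ ~ In x (ball d N)).
    { apply NNPP; intros Hne. apply H3. exists (ball d N). intros v Hv.
      apply NNPP; intros Hnin. apply Hne. exists v; auto. }
    destruct Hex as (x & Hx & Hnin).
    assert (Hvx := infected_valid _ _ _ Hx).
    assert (HN : (N <= length x)%nat).
    { destruct (Nat.le_gt_cases N (length x)); auto. exfalso; apply Hnin, ball_in; auto. }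
    exists (firstn N x). split; [apply firstn_length_le; auto|].
    assert (Hv1 : valid d (firstn N x)) by (apply (valid_prefix d _ (skipn N x)); rewrite firstn_skipn; auto).
    split; auto.
    rewrite (wk_dep_valid d om om'); auto.
    + intros Hw. apply (infected_wk d om' x Hx).
      rewrite <- (firstn_skipn N x), wk_app, Hw. auto.
    + intros y Hy Hl. symmetry; apply H2. apply ball_in. split; auto.
      rewrite firstn_length_le in Hl; simpl in Hl; auto.
  - intros (x & Hl & Hv & Hw).
    set (om' := fun y : vertex => if (length y <? N)%nat then om y else n).
    exists om'. split; [|split].
    + intros v _. unfold om'. destruct (length v <? N)%nat; auto.
    + intros v Hin. apply ball_in in Hin. unfold om'.
      destruct (Nat.ltb_spec (length v) N); auto; lia.
    + assert (Hw' : wk om' [] 0 x <> None).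
      { rewrite <- (wk_dep om om'); auto. intros y Hy. unfold om'.
        simpl in Hy. destruct (Nat.ltb_spec (length y) N); auto; lia. }
      assert (Hinf : forall j, valid d (x ++ repeat 0%nat j) /\ infected d om' (x ++ repeat 0%nat j)).
      { induction j.
        - simpl. rewrite app_nil_r. split; auto. apply wk_infected_root; auto.
        - destruct IHj as [Hv1 Hi1].
          replace (x ++ repeat 0%nat (S j)) with ((x ++ repeat 0%nat j) ++ [0%nat])
            by (rewrite <- app_assoc, <- repeat_cons; auto).
          assert (Hv2 : valid d ((x ++ repeat 0%nat j) ++ [0%nat])) by (apply valid_snoc; auto; lia).
          split; auto. apply inf_step; auto. simpl. unfold om'.
          rewrite length_app, repeat_length. destruct (Nat.ltb_spec (length x + j) N); lia. }
      intros (l & Hl2).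
      set (M := list_max (map (@length nat) l)).
      destruct (Hinf (S M)) as [_ Hi]. apply Hl2 in Hi.
      assert (HM : Forall (fun k => (k <= M)%nat) (map (@length nat) l)) by (apply list_max_le; lia).
      rewrite Forall_forall in HM. specialize (HM (length (x ++ repeat 0%nat (S M)))).
      rewrite length_app, repeat_length in HM.
      assert (HH : (length x + S M <= M)%nat).
      { apply HM. apply in_map_iff. exists (x ++ repeat 0%nat (S M)). rewrite length_app, repeat_length; auto. }
      lia.
Qed.


Fixpoint g (d n : nat) (p : R) (k r : nat) : R :=
  match k with
  | O => 1
  | S k' => sum_f_R0 (fun j => binom_pmf n p j *
              match Nat.max r j with O => 0 | S m => 1 - (1 - g d n p k' m) ^ d end) n
  end.

Definition psi d n p k m := match m with O => 0 | S m' => 1 - (1 - g d n p k m') ^ d end.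

Lemma g_S d n p k r : g d n p (S k) r = sum_f_R0 (fun j => binom_pmf n p j * psi d n p k (Nat.max r j)) n.
Proof. reflexivity. Qed.

Definition Gr d n p N :=
  match N with
  | O => 1
  | S k => sum_f_R0 (fun j => binom_pmf n p j *
             match j with O => 0 | S m => 1 - (1 - g d n p k m) ^ (S d) end) n
  end.

Lemma reach_dep d k : forall u r o o', (forall w, o (u ++ w) = o' (u ++ w)) ->
  (reach d u r k o <-> reach d u r k o').
Proof.
  induction k; intros u r o o' H; simpl; [tauto|].
  assert (Hu : o u = o' u) by (rewrite <- (app_nil_r u); auto). rewrite Hu.
  split; intros [H1 (i & Hi & Hr)]; split; auto; exists i; split; auto;
  (eapply IHk; [|exact Hr]); intros w; rewrite <- app_assoc; auto.
Qed.

Lemma dep_reach d u s k : dep (fun x => exists w, x = u ++ w) (fun o => 1 - Defs.ind (reach d u s k o)).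
Proof.
  intros o o' H. f_equal. apply ind_iff. apply reach_dep. intros w; apply H; eauto.
Qed.

Lemma app_snoc_inj (v : vertex) a i w w' : (v ++ [a]) ++ w = (v ++ [i]) ++ w' -> a = i.
Proof.
  rewrite <- !app_assoc. intros H. apply app_inv_head in H. simpl in H. congruence.
Qed.

Lemma children_prob d n p v k s gk :
  (forall i o, E n p (sub d (v ++ [i]) k) (fun o => Defs.ind (reach d (v ++ [i]) s k o)) o = gk) ->
  forall c a om,
  E n p (flat_map (fun i => sub d (v ++ [i]) k) (seq a c))
    (fun o => Defs.ind (exists i, (a <= i < a + c)%nat /\ reach d (v ++ [i]) s k o)) om = 1 - (1 - gk) ^ c.
Proof.
  intros Hg c; induction c as [|c IH]; intros a om.
  - cbn [seq flat_map E]. rewrite ind_false; [simpl; ring|]. intros (i & Hi & _); lia.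
  - cbn [seq flat_map].
    rewrite (E_ext _ _ _ _ (fun o => 1 + (-1) * ((fun o => 1 - Defs.ind (reach d (v ++ [a]) s k o)) o *
                (fun o => 1 - Defs.ind (exists i, (S a <= i < S a + c)%nat /\ reach d (v ++ [i]) s k o)) o))).
    2:{ intros o. rewrite ind_iff with (Q := reach d (v ++ [a]) s k o \/ exists i, (S a <= i < S a + c)%nat /\ reach d (v ++ [i]) s k o).
        1: rewrite ind_or; ring.
        split.
        - intros (i & Hi & H). destruct (Nat.eq_dec i a); [subst; left; auto|right; exists i; split; auto; lia].
        - intros [H|(i & Hi & H)]; [exists a; split; auto; lia|exists i; split; auto; lia]. }
    rewrite E_lin.
    rewrite (E_prod _ _ _ _ (fun x => exists w, x = (v ++ [a]) ++ w)
               (fun x => exists i w, (S a <= i < S a + c)%nat /\ x = (v ++ [i]) ++ w)).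
    + rewrite (E_ext _ _ (sub d (v ++ [a]) k) _ (fun o => 1 + (-1) * Defs.ind (reach d (v ++ [a]) s k o))) by (intros; ring).
      rewrite E_lin, Hg.
      rewrite (E_ext _ _ _ _ (fun o => 1 + (-1) * Defs.ind (exists i, (S a <= i < S a + c)%nat /\ reach d (v ++ [i]) s k o))) by (intros; ring).
      rewrite E_lin, IH. simpl. ring.
    + apply dep_reach.
    + intros o o' H. f_equal. apply ind_iff. split; intros (i & Hi & Hr); exists i; split; auto;
        (eapply reach_dep; [|exact Hr]); intros w; first [apply H; eauto | symmetry; apply H; eauto].
    + intros x Hx (i & w & Hi & ->). apply sub_in in Hx as (w' & Hx & _).
      apply app_snoc_inj in Hx. lia.
    + intros x Hx (w & ->). apply in_flat_map in Hx as (i & Hi & Hx). apply in_seq in Hi.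
      apply sub_in in Hx as (w' & Hx & _). apply app_snoc_inj in Hx. lia.
Qed.

Lemma sub_prob d n p k : forall v r om,
  E n p (sub d v k) (fun o => Defs.ind (reach d v r k o)) om = g d n p k r.
Proof.
  induction k; intros v r om.
  - simpl. apply ind_true; auto.
  - rewrite g_S. cbn [sub E]. apply sum_eq; intros j Hj. f_equal.
    rewrite (E_ext_gen _ _ _ _ (fun o => match Nat.max r j with O => 0 | S m =>
        Defs.ind (exists i, (0 <= i < 0 + d)%nat /\ reach d (v ++ [i]) m k o) end)).
    + unfold psi. destruct (Nat.max r j) as [|m].
      * apply E_const.
      * apply children_prob. intros; apply IHk.
    + intros o Ho _.
      assert (Hv : o v = j).
      { rewrite Ho. unfold upd. destruct (list_eq_dec Nat.eq_dec v v); congruence.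
        intros Hin. apply in_flat_map in Hin as (i & _ & Hin). apply sub_in in Hin as (w & Hw & _).
        apply (f_equal (@length nat)) in Hw. rewrite !length_app in Hw. simpl in Hw. lia. }
      cbn [reach]. rewrite Hv. destruct (Nat.max r j) as [|m].
      * apply ind_false. lia.
      * apply ind_iff. replace (S m - 1)%nat with m by lia. split.
        -- intros [_ (i & Hi & H)]; exists i; split; auto; lia.
        -- intros (i & Hi & H); split; [lia|]; exists i; split; auto; lia.
Qed.

Lemma root_prob d n p N om :
  E n p (rootlist d N) (fun o => Defs.ind (reachRoot d N o)) om = Gr d n p N.
Proof.
  destruct N as [|k].
  - simpl. apply ind_true; auto.
  - unfold rootlist, Gr. cbn [E]. apply sum_eq; intros j Hj. f_equal.
    rewrite (E_ext_gen _ _ _ _ (fun o => match j with O => 0 | S m =>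
        Defs.ind (exists i, (0 <= i < 0 + S d)%nat /\ reach d ([] ++ [i]) m k o) end)).
    + destruct j as [|m].
      * apply E_const.
      * apply (children_prob d n p [] k m (g d n p k m)). intros; apply sub_prob.
    + intros o Ho _.
      assert (Hv : o [] = j).
      { rewrite Ho. unfold upd. destruct (list_eq_dec Nat.eq_dec [] []); congruence.
        intros Hin. apply in_flat_map in Hin as (i & _ & Hin). apply sub_in in Hin as (w & Hw & _).
        apply (f_equal (@length nat)) in Hw. rewrite !length_app in Hw. simpl in Hw. lia. }
      unfold reachRoot. rewrite Hv. destruct j as [|m].
      * apply ind_false. lia.
      * apply ind_iff. replace (S m - 1)%nat with m by lia. split.
        -- intros [_ (i & Hi & H)]; exists i; split; auto; lia.
        -- intros (i & Hi & H); split; [lia|]; exists i; split; auto; lia.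
Qed.

Lemma cyl_prob_Gr d n p N : (2 <= d)%nat -> (1 <= n)%nat ->
  cyl_prob d n p (percolates d) N = Gr d n p N.
Proof.
  intros Hd Hn. unfold cyl_prob. rewrite integ_E.
  rewrite (E_set _ _ _ (rootlist d N)) by apply ball_rootlist.
  rewrite <- (root_prob d n p N (fun _ => 0%nat)).
  apply E_ext_gen. intros o H1 H2. apply ind_iff. apply hull_iff; auto.
  intros v. destruct (in_dec (list_eq_dec Nat.eq_dec) v (rootlist d N)); auto.
  rewrite H1 by auto. lia.
Qed.


Lemma C_n0 n : C n 0 = 1.
Proof.
  unfold C. rewrite Nat.sub_0_r. simpl. field. apply not_0_INR, fact_neq_0.
Qed.

Lemma C_nn n : C n n = 1.
Proof.
  unfold C. rewrite Nat.sub_diag. simpl. field. apply not_0_INR, fact_neq_0.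
Qed.

Lemma pow01 x m : 0 <= x <= 1 -> 0 <= x ^ m <= 1.
Proof.
  intros H. split; [apply pow_le; lra|]. rewrite <- (pow1 m). apply pow_incr; lra.
Qed.

Lemma Eq_mono n p a b : 0 <= p <= 1 -> (forall j, (j <= n)%nat -> a j <= b j) ->
  sum_f_R0 (fun j => binom_pmf n p j * a j) n <= sum_f_R0 (fun j => binom_pmf n p j * b j) n.
Proof.
  intros Hp H. apply sum_Rle. intros j Hj. apply Rmult_le_compat_l; auto. apply pmf_nonneg; auto.
Qed.

Lemma Eq_const n p c : sum_f_R0 (fun j => binom_pmf n p j * c) n = c.
Proof. apply pmf_sum_c. Qed.

Lemma Eq_bounds n p a : 0 <= p <= 1 -> (forall j, 0 <= a j <= 1) ->
  0 <= sum_f_R0 (fun j => binom_pmf n p j * a j) n <= 1.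
Proof.
  intros Hp H. split.
  - apply Rle_trans with (sum_f_R0 (fun j => binom_pmf n p j * 0) n); [rewrite Eq_const; lra|].
    apply Eq_mono; auto. intros; apply H.
  - apply Rle_trans with (sum_f_R0 (fun j => binom_pmf n p j * 1) n); [|rewrite Eq_const; lra].
    apply Eq_mono; auto. intros; apply H.
Qed.

Lemma sum_lin2 (f h : nat -> R) a b N :
  sum_f_R0 (fun j => f j * a + h j * b) N = sum_f_R0 f N * a + sum_f_R0 h N * b.
Proof. induction N; simpl; [ring|rewrite IHN; ring]. Qed.

Lemma one_minus_pow_mono x y e : 0 <= x <= y -> y <= 1 -> 1 - (1 - x) ^ e <= 1 - (1 - y) ^ e.
Proof. intros H1 H2. assert ((1 - y) ^ e <= (1 - x) ^ e) by (apply pow_incr; lra). lra. Qed.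

Lemma g_bounds d n p k r : 0 <= p <= 1 -> 0 <= g d n p k r <= 1.
Proof.
  intros Hp. revert r; induction k; intros r; simpl; [lra|].
  apply Eq_bounds; auto. intros j. destruct (Nat.max r j) as [|m]; [lra|].
  specialize (IHk m). assert (H := pow01 (1 - g d n p k m) d ltac:(lra)). lra.
Qed.

Lemma psi_bounds d n p k m : 0 <= p <= 1 -> 0 <= psi d n p k m <= 1.
Proof.
  intros Hp. destruct m as [|m]; simpl; [lra|].
  assert (H0 := g_bounds d n p k m Hp). assert (H := pow01 (1 - g d n p k m) d ltac:(lra)). lra.
Qed.

Lemma psi_mono_gen d n p k m m' : 0 <= p <= 1 ->
  (forall a b, (a <= b)%nat -> g d n p k a <= g d n p k b) ->
  (m <= m')%nat -> psi d n p k m <= psi d n p k m'.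
Proof.
  intros Hp Hg H. destruct m as [|m]; destruct m' as [|m']; try lia.
  - simpl; lra.
  - apply psi_bounds with (m := S m'); auto.
  - simpl. apply one_minus_pow_mono; [split|]; [apply g_bounds; auto| apply Hg; lia | apply g_bounds; auto].
Qed.

Lemma g_mono_r d n p k : 0 <= p <= 1 -> forall r r', (r <= r')%nat -> g d n p k r <= g d n p k r'.
Proof.
  intros Hp. induction k; intros r r' H; [simpl; lra|].
  rewrite !g_S. apply Eq_mono; auto. intros j _.
  apply psi_mono_gen; auto. lia.
Qed.

Lemma psi_mono d n p k m m' : 0 <= p <= 1 -> (m <= m')%nat -> psi d n p k m <= psi d n p k m'.
Proof. intros Hp H. apply psi_mono_gen; auto. apply g_mono_r; auto. Qed.

Lemma g_dec_k d n p k : 0 <= p <= 1 -> forall r, g d n p (S k) r <= g d n p k r.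
Proof.
  intros Hp. induction k; intros r.
  - simpl g at 2. apply g_bounds; auto.
  - rewrite (g_S d n p (S k)), (g_S d n p k). apply Eq_mono; auto. intros j _.
    unfold psi. destruct (Nat.max r j) as [|m]; [lra|].
    apply one_minus_pow_mono; [split|]; [apply g_bounds; auto|apply IHk|apply g_bounds; auto].
Qed.

Lemma g_dec d n p a b : 0 <= p <= 1 -> (a <= b)%nat -> forall r, g d n p b r <= g d n p a r.
Proof.
  intros Hp H r. induction H; [lra|]. eapply Rle_trans; [apply g_dec_k; auto|auto].
Qed.

Definition T d n p k r := if (k <=? r)%nat then 1 else 1 - (1 - g d n p (k - r) 0) ^ (d ^ r).

Lemma T_bounds d n p k r : 0 <= p <= 1 -> 0 <= T d n p k r <= 1.
Proof.
  intros Hp. unfold T. destruct (k <=? r)%nat; [lra|].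
  assert (H0 := g_bounds d n p (k - r) 0 Hp). assert (H := pow01 (1 - g d n p (k - r) 0) (d ^ r) ltac:(lra)). lra.
Qed.

Lemma T_step d n p k r : (1 <= d)%nat -> 1 - (1 - T d n p k r) ^ d = T d n p (S k) (S r).
Proof.
  intros Hd. unfold T. simpl Nat.leb. destruct (Nat.leb_spec k r).
  - replace (1 - 1) with 0 by ring. rewrite pow_i by lia. ring.
  - replace (S k - S r)%nat with (k - r)%nat by lia. f_equal.
    replace (1 - (1 - (1 - g d n p (k - r) 0) ^ d ^ r)) with ((1 - g d n p (k - r) 0) ^ d ^ r) by ring.
    rewrite <- pow_mult. f_equal. simpl. lia.
Qed.

Lemma g_ge_T d n p k : 0 <= p <= 1 -> (1 <= d)%nat -> forall r, T d n p k r <= g d n p k r.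
Proof.
  intros Hp Hd. induction k; intros r.
  - unfold T. simpl. lra.
  - destruct r as [|r].
    + unfold T. replace (S k <=? 0)%nat with false by reflexivity. rewrite Nat.sub_0_r, Nat.pow_0_r, pow_1. lra.
    + rewrite <- T_step by auto. rewrite g_S.
      eapply Rle_trans with (sum_f_R0 (fun j => binom_pmf n p j * psi d n p k (S r)) n).
      * rewrite Eq_const. simpl. apply one_minus_pow_mono; [split|]; [apply T_bounds; auto|apply IHk|apply g_bounds; auto].
      * apply Eq_mono; auto. intros j _. apply psi_mono; auto; lia.
Qed.

Lemma bonf c N : 0 <= c <= 1 -> (1 - c) ^ N <= 1 - INR N * c + INR N * (INR N - 1) / 2 * c ^ 2.
Proof.
  intros Hc. induction N.
  - simpl. lra.
  - rewrite S_INR. simpl pow.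
    assert (H1 : (1 - c) * (1 - c) ^ N <= (1 - c) * (1 - INR N * c + INR N * (INR N - 1) / 2 * c ^ 2))
      by (apply Rmult_le_compat_l; lra).
    assert (HN : 0 <= INR N * (INR N - 1)).
    { destruct N; [simpl; lra|]. rewrite S_INR. assert (0 <= INR N) by apply pos_INR. nra. }
    assert (Hc3 : 0 <= INR N * (INR N - 1) * (c * c * c)).
    { apply Rmult_le_pos; auto. assert (0 <= c * c) by nra. nra. }
    simpl in H1. nra.
Qed.

Lemma bern2 c N : 0 <= c <= 1 -> INR N * c - INR N * INR N * c * c <= 1 - (1 - c) ^ N.
Proof.
  intros Hc. assert (H := bonf c N Hc). assert (0 <= INR N) by apply pos_INR.
  assert (INR N * (INR N - 1) / 2 * c ^ 2 <= INR N * INR N * c * c) by (simpl; nra). lra.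
Qed.

Definition aj (d : nat) (j : nat) : R := match j with O => 0 | S _ => INR d ^ j end.

Lemma mgf n p d : sum_f_R0 (fun j => binom_pmf n p j * INR d ^ j) n = (p * INR d + 1 - p) ^ n.
Proof.
  replace (p * INR d + 1 - p) with (p * INR d + (1 - p)) by ring. rewrite binomial.
  apply sum_eq; intros j _. unfold binom_pmf. rewrite Rpow_mult_distr. ring.
Qed.

Lemma q0 n p : binom_pmf n p 0 = (1 - p) ^ n.
Proof. unfold binom_pmf. rewrite C_n0, Nat.sub_0_r. simpl. ring. Qed.

Lemma qn n p : binom_pmf n p n = p ^ n.
Proof. unfold binom_pmf. rewrite C_nn, Nat.sub_diag. simpl. ring. Qed.

Lemma mu_eq n p d : (1 <= n)%nat ->
  sum_f_R0 (fun j => binom_pmf n p j * aj d j) n = (p * INR d + 1 - p) ^ n - (1 - p) ^ n.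
Proof.
  intros Hn. rewrite <- mgf, <- q0.
  rewrite (decomp_sum _ n) by lia. rewrite (decomp_sum (fun j => binom_pmf n p j * INR d ^ j) n) by lia.
  simpl aj. simpl pow. ring_simplify. apply sum_eq. intros; reflexivity.
Qed.

Definition phi d (c : R) j := match j with O => 0 | S m => 1 - (1 - c) ^ (d ^ j) end.

Lemma lower_g d n p c : 0 < p < 1 -> (1 <= d)%nat -> 0 < c <= 1 ->
  c <= sum_f_R0 (fun j => binom_pmf n p j * phi d c j) n ->
  forall k, c <= g d n p k 0.
Proof.
  intros Hp Hd Hc Hphi.
  assert (H : forall k, forall t, (t <= k)%nat -> c <= g d n p t 0).
  { induction k; intros t Ht.
    - replace t with 0%nat by lia. simpl; lra.
    - destruct (Nat.eq_dec t (S k)) as [->|]; [|apply IHk; lia].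
      eapply Rle_trans; [exact Hphi|]. rewrite g_S. apply Eq_mono; [lra|]. intros j Hj.
      rewrite Nat.max_0_l. destruct j as [|m]; [simpl; lra|].
      apply Rle_trans with (T d n p (S k) (S m)).
      2:{ rewrite <- T_step by auto. unfold psi. apply one_minus_pow_mono; [split|];
          [apply T_bounds; lra|apply g_ge_T; auto; lra|apply g_bounds; lra]. }
      unfold T, phi. destruct (Nat.leb_spec (S k) (S m)).
      + assert (0 <= (1 - c) ^ d ^ S m) by (apply pow_le; lra). lra.
      + apply one_minus_pow_mono; [split|]; [lra|apply IHk; lia|apply g_bounds; lra]. }
  intros k; apply (H k); lia.
Qed.

Lemma part1 d n p : (2 <= d)%nat -> (1 <= n)%nat -> 0 < p < 1 ->
  (p * INR d + 1 - p) ^ n - (1 - p) ^ n > 1 ->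
  exists c : R, 0 < c /\ forall N : nat, c <= Gr d n p N.
Proof.
  intros Hd Hn Hp Hmu.
  set (mu := sum_f_R0 (fun j => binom_pmf n p j * aj d j) n).
  set (K := sum_f_R0 (fun j => binom_pmf n p j * (aj d j * aj d j)) n).
  assert (Hmu' : mu > 1) by (unfold mu; rewrite mu_eq; auto).
  assert (HKmu : mu <= K).
  { apply Eq_mono; [lra|]. intros j _. destruct j as [|m]; cbn [aj]; [lra|].
    assert (1 <= INR d ^ S m) by (apply pow_R1_Rle; assert (2 <= INR d) by (apply (le_INR 2); auto); lra).
    nra. }
  set (c := (mu - 1) / K).
  assert (HK : 0 < K) by lra.
  assert (Hc : 0 < c <= 1).
  { unfold c. split; [apply Rdiv_lt_0_compat; lra|]. apply (Rmult_le_reg_r K); auto. replace ((mu - 1) / K * K) with (mu - 1) by (field; lra). lra. }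
  exists c. split; [lra|].
  assert (Hphi : c <= sum_f_R0 (fun j => binom_pmf n p j * phi d c j) n).
  { eapply Rle_trans with (sum_f_R0 (fun j => binom_pmf n p j * (aj d j * c - aj d j * aj d j * c * c)) n).
    - rewrite (sum_eq _ (fun j => (binom_pmf n p j * aj d j) * c + (binom_pmf n p j * (aj d j * aj d j)) * (- (c * c))))
        by (intros; ring).
      rewrite sum_lin2. fold mu K.
      replace (mu * c + K * - (c * c)) with (c * (mu - c * K)) by ring.
      unfold c. field_simplify; lra.
    - apply Eq_mono; [lra|]. intros j _. destruct j as [|m]; cbn [aj phi]; [lra|].
      rewrite <- pow_INR. apply bern2; lra. }
  intros N. destruct N as [|k]; [simpl; lra|].
  apply Rle_trans with (g d n p (S k) 0); [apply (lower_g d n p c); auto; lia|]. rewrite g_S. unfold Gr.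
  apply Eq_mono; [lra|]. intros j _. rewrite Nat.max_0_l. destruct j as [|m]; simpl psi; [lra|].
  assert (H0 := g_bounds d n p k m ltac:(lra)).
  set (x := 1 - g d n p k m). assert (0 <= x <= 1) by (unfold x; lra).
  assert (H1 := pow01 x d ltac:(lra)).
  assert (x ^ S d <= x ^ d). { change (x ^ S d) with (x * x ^ d). nra. }
  lra.
Qed.


Fixpoint Nn (d m : nat) : nat := match m with O => 1%nat | S m' => S (d * Nn d m') end.
Definition ex (d j : nat) : nat := match j with O => 0%nat | S m => (d * Nn d m)%nat end.

Definition xx d n p k r := 1 - g d n p k r.
Definition yy d n p k := xx d n p k 0.
Definition XX d n p k m := 1 - psi d n p k m.

Lemma Nn_pos d m : (1 <= Nn d m)%nat.
Proof. destruct m; simpl; lia. Qed.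

Lemma Nn_mono d a b : (1 <= d)%nat -> (a <= b)%nat -> (Nn d a <= Nn d b)%nat.
Proof.
  intros Hd; induction 1; auto. simpl. assert (Nn d m <= d * Nn d m)%nat by nia.
  lia.
Qed.

Lemma pow_exp_mono x a b : 0 <= x <= 1 -> (a <= b)%nat -> x ^ b <= x ^ a.
Proof.
  intros Hx H. replace b with (a + (b - a))%nat by lia. rewrite pow_add.
  assert (H1 := pow01 x (b - a) Hx). assert (H2 := pow01 x a Hx). nra.
Qed.

Lemma xx_bounds d n p k r : 0 <= p <= 1 -> 0 <= xx d n p k r <= 1.
Proof. intros Hp. unfold xx. assert (H := g_bounds d n p k r Hp). lra. Qed.

Lemma XX_bounds d n p k m : 0 <= p <= 1 -> 0 <= XX d n p k m <= 1.
Proof. intros Hp. unfold XX. assert (H := psi_bounds d n p k m Hp). lra. Qed.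

Lemma yy_mono d n p a b : 0 <= p <= 1 -> (a <= b)%nat -> yy d n p a <= yy d n p b.
Proof. intros Hp H. unfold yy, xx. assert (H1 := g_dec d n p a b Hp H 0). lra. Qed.

Lemma XX_S d n p k m : XX d n p k (S m) = xx d n p k m ^ d.
Proof. unfold XX, psi, xx. ring. Qed.

Lemma xx_S d n p k r : xx d n p (S k) r = sum_f_R0 (fun j => binom_pmf n p j * XX d n p k (Nat.max r j)) n.
Proof.
  unfold xx, XX. rewrite g_S.
  rewrite (sum_eq (fun j => binom_pmf n p j * (1 - psi d n p k (Nat.max r j)))
             (fun j => binom_pmf n p j * 1 + binom_pmf n p j * psi d n p k (Nat.max r j) * (-1))) by (intros; ring).
  rewrite sum_lin2. replace (sum_f_R0 (binom_pmf n p) n) with 1 by (symmetry; apply pmf_sum). ring.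
Qed.

Lemma inv2 d n p k : 0 <= p <= 1 -> forall r, yy d n p (k - r) ^ (Nn d r) <= xx d n p k r.
Proof.
  intros Hp. induction k; intros r.
  - assert (H : yy d n p (0 - r) = 0) by (unfold yy, xx; simpl; ring). rewrite H.
    destruct (Nn_pos d r) as [|? ?]; [simpl; unfold xx; simpl; lra|].
    rewrite pow_i by lia. unfold xx; simpl; lra.
  - destruct r as [|r].
    + simpl Nn. rewrite pow_1, Nat.sub_0_r. unfold yy; lra.
    + replace (S k - S r)%nat with (k - r)%nat by lia.
      set (w := yy d n p (k - r)).
      assert (Hw : 0 <= w <= 1) by (apply xx_bounds; auto).
      set (e := (d * Nn d r)%nat).
      assert (He : w ^ e <= XX d n p k (S r)).
      { rewrite XX_S. unfold e. rewrite Nat.mul_comm, pow_mult. apply pow_incr. split; [|apply IHk].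
        apply pow_le; lra. }
      assert (Hwe := pow01 w e Hw).
      rewrite xx_S.
      apply Rle_trans with (w ^ e * yy d n p (S k)).
      * simpl Nn. fold e. simpl pow.
        assert (w <= yy d n p (S k)) by (apply yy_mono; auto; lia). nra.
      * unfold yy at 1. rewrite xx_S. rewrite scal_sum.
        apply sum_Rle. intros j _. rewrite Nat.max_0_l.
        assert (Hq := pmf_nonneg n p j Hp).
        assert (HX := XX_bounds d n p k j Hp).
        rewrite Rmult_assoc. apply Rmult_le_compat_l; auto.
        destruct (Nat.le_gt_cases j (S r)).
        -- rewrite Nat.max_l by auto. nra.
        -- rewrite Nat.max_r by lia. nra.
Qed.

Definition FF d n p (w : R) := sum_f_R0 (fun j => binom_pmf n p j * w ^ (ex d j)) n.

Lemma yy_rec d n p k : 0 <= p <= 1 -> (1 <= n)%nat ->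
  FF d n p (yy d n p (S k - n)) <= yy d n p (S k).
Proof.
  intros Hp Hn. unfold FF. unfold yy at 2. rewrite xx_S.
  apply Eq_mono; auto. intros j Hj. rewrite Nat.max_0_l.
  set (w := yy d n p (S k - n)). assert (Hw : 0 <= w <= 1) by (apply xx_bounds; auto).
  destruct j as [|m].
  - unfold XX, psi. simpl. lra.
  - rewrite XX_S. simpl ex. rewrite Nat.mul_comm, pow_mult. apply pow_incr. split; [apply pow_le; lra|].
    eapply Rle_trans; [|apply inv2; auto]. apply pow_incr. split; [lra|]. apply yy_mono; auto; lia.
Qed.

Lemma bern3 h e : 0 <= h <= 1 -> 1 - INR (S e) * h + INR e * h ^ 2 <= (1 - h) ^ (S e).
Proof.
  intros Hh. induction e.
  - simpl. lra.
  - rewrite S_INR in *. rewrite S_INR in *. change ((1 - h) ^ S (S e)) with ((1 - h) * (1 - h) ^ S e).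
    assert (H1 : (1 - h) * (1 - (INR e + 1) * h + INR e * h ^ 2) <= (1 - h) * (1 - h) ^ S e)
      by (apply Rmult_le_compat_l; lra).
    assert (0 <= INR e) by apply pos_INR.
    assert (0 <= INR e * (h * h) * (1 - h)) by (apply Rmult_le_pos; [apply Rmult_le_pos; nra|lra]).
    simpl in *. nra.
Qed.

Lemma bern1 h M : 0 <= h <= 1 -> 1 - INR M * h <= (1 - h) ^ M.
Proof.
  intros Hh. destruct M; [simpl; lra|]. assert (H := bern3 h M Hh).
  assert (0 <= INR M * h ^ 2) by (apply Rmult_le_pos; [apply pos_INR|simpl; nra]). lra.
Qed.

Lemma FF_gap d n p w : 0 < p < 1 -> (1 <= n)%nat -> (2 <= ex d n)%nat ->
  sum_f_R0 (fun j => binom_pmf n p j * INR (ex d j)) n <= 1 ->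
  0 <= w <= 1 -> w + p ^ n * (1 - w) ^ 2 <= FF d n p w.
Proof.
  intros Hp Hn Hex Hmean Hw. set (h := 1 - w).
  assert (Hterm : forall j, (1 - INR (ex d j)) * h + INR (ex d j - 1) * h ^ 2 <= w ^ ex d j - w).
  { intros j. destruct (ex d j) as [|e].
    - simpl. unfold h. lra.
    - replace (S e - 1)%nat with e by lia. replace w with (1 - h) by (unfold h; ring).
      assert (H := bern3 h e ltac:(unfold h; lra)). rewrite S_INR in *. lra. }
  assert (Hsum : sum_f_R0 (fun j => binom_pmf n p j * ((1 - INR (ex d j)) * h + INR (ex d j - 1) * h ^ 2)) n
                 <= FF d n p w - w).
  { assert (Hdiff : sum_f_R0 (fun j => binom_pmf n p j * (w ^ ex d j - w)) n = FF d n p w - w).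
    { rewrite (sum_eq _ (fun j => (binom_pmf n p j * w ^ ex d j) * 1 + (binom_pmf n p j * w) * (-1))) by (intros; ring).
      rewrite sum_lin2, pmf_sum_c. unfold FF. ring. }
    rewrite <- Hdiff. apply Eq_mono; [lra|]. intros j _. apply Hterm. }
  assert (Heq : sum_f_R0 (fun j => binom_pmf n p j * ((1 - INR (ex d j)) * h + INR (ex d j - 1) * h ^ 2)) n
     = sum_f_R0 (fun j => binom_pmf n p j) n * h + sum_f_R0 (fun j => binom_pmf n p j * INR (ex d j)) n * - h
       + h ^ 2 * sum_f_R0 (fun j => binom_pmf n p j * INR (ex d j - 1)) n).
  { rewrite scal_sum, <- sum_lin2, <- sum_plus. apply sum_eq; intros; ring. }
  rewrite Heq in Hsum.
  assert (Hfirst : sum_f_R0 (fun j => binom_pmf n p j) n * h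
                   + sum_f_R0 (fun j => binom_pmf n p j * INR (ex d j)) n * - h >= 0).
  { rewrite pmf_sum. unfold h. nra. }
  assert (Hlast : p ^ n * 1 <= sum_f_R0 (fun j => binom_pmf n p j * INR (ex d j - 1)) n).
  { destruct n as [|n']; [lia|]. rewrite tech5. rewrite qn.
    assert (0 <= sum_f_R0 (fun j => binom_pmf (S n') p j * INR (ex d j - 1)) n').
    { apply cond_pos_sum. intros j. apply Rmult_le_pos; [apply pmf_nonneg; lra|apply pos_INR]. }
    assert (1 <= INR (ex d (S n') - 1)) by (apply (le_INR 1); lia).
    assert (0 < p ^ S n') by (apply pow_lt; lra). nra. }
  assert (0 <= h ^ 2) by (simpl; nra).
  assert (p ^ n * 1 * h ^ 2 <= h ^ 2 * sum_f_R0 (fun j => binom_pmf n p j * INR (ex d j - 1)) n) by nra.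
  unfold h in *. lra.
Qed.

Lemma Nn_id d m : INR (Nn d m) * (INR d - 1) = INR d ^ S m - 1.
Proof.
  induction m; simpl Nn.
  - simpl. ring.
  - rewrite S_INR, mult_INR. change (INR d ^ S (S m)) with (INR d * INR d ^ S m).
    replace ((INR (d * Nn d m) + 1)) with (INR d * INR (Nn d m) + 1) by (rewrite mult_INR; ring).
    replace ((INR d * INR (Nn d m) + 1) * (INR d - 1)) with (INR d * (INR (Nn d m) * (INR d - 1)) + (INR d - 1)) by ring.
    rewrite IHm. ring.
Qed.

Lemma ex_id d j : INR (ex d j) * (INR d - 1) = INR d * (INR d ^ j - 1).
Proof.
  destruct j as [|m]; simpl ex.
  - simpl. ring.
  - rewrite mult_INR. rewrite Rmult_assoc, Nn_id. ring.
Qed.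

Lemma mean_le d n p : (2 <= d)%nat -> 0 <= p <= 1 ->
  2 * INR d - INR d * (p * INR d + 1 - p) ^ n >= 1 ->
  sum_f_R0 (fun j => binom_pmf n p j * INR (ex d j)) n <= 1.
Proof.
  intros Hd Hp H. assert (Hd' : 2 <= INR d) by (apply (le_INR 2); auto).
  rewrite <- mgf in H.
  assert (Heq : sum_f_R0 (fun j => binom_pmf n p j * INR (ex d j)) n * (INR d - 1)
     = INR d * sum_f_R0 (fun j => binom_pmf n p j * INR d ^ j) n - INR d).
  { rewrite Rmult_comm, sum_mult_l.
    rewrite (sum_eq _ (fun j => (binom_pmf n p j * INR d ^ j) * INR d + binom_pmf n p j * (- INR d))).
    - rewrite sum_lin2. replace (sum_f_R0 (binom_pmf n p) n) with 1 by (symmetry; apply pmf_sum). ring.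
    - intros j _. replace ((INR d - 1) * (binom_pmf n p j * INR (ex d j))) with (binom_pmf n p j * (INR (ex d j) * (INR d - 1))) by ring.
      rewrite ex_id. ring. }
  set (S0 := sum_f_R0 (fun j => binom_pmf n p j * INR (ex d j)) n) in *.
  assert (S0 * (INR d - 1) <= 1 * (INR d - 1)) by lra.
  apply Rmult_le_reg_r in H0; lra.
Qed.

Lemma ex_n_ge2 d n : (2 <= d)%nat -> (1 <= n)%nat -> (2 <= ex d n)%nat.
Proof.
  intros Hd Hn. destruct n as [|m]; [lia|]. simpl. assert (H := Nn_pos d m). nia.
Qed.

Lemma u_step d n p m : (2 <= d)%nat -> (1 <= n)%nat -> 0 < p < 1 ->
  2 * INR d - INR d * (p * INR d + 1 - p) ^ n >= 1 ->
  yy d n p (m * n) + p ^ n * (1 - yy d n p (m * n)) ^ 2 <= yy d n p (S m * n).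
Proof.
  intros Hd Hn Hp Hc.
  replace (S m * n)%nat with (S (m * n + (n - 1))) by nia.
  eapply Rle_trans; [|apply yy_rec; auto; lra].
  replace (S (m * n + (n - 1)) - n)%nat with (m * n)%nat by nia.
  apply FF_gap; auto.
  - apply ex_n_ge2; auto.
  - apply mean_le; auto; lra.
  - apply xx_bounds; lra.
Qed.

Lemma u_reach d n p eps : (2 <= d)%nat -> (1 <= n)%nat -> 0 < p < 1 ->
  2 * INR d - INR d * (p * INR d + 1 - p) ^ n >= 1 -> 0 < eps ->
  exists m, 1 - eps < yy d n p (m * n).
Proof.
  intros Hd Hn Hp Hc He.
  assert (Hpn : 0 < p ^ n) by (apply pow_lt; lra).
  assert (Hdisj : forall m, 1 - eps < yy d n p (m * n) \/ INR m * (p ^ n * (eps * eps)) <= yy d n p (m * n)).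
  { induction m.
    - right. simpl. assert (H := xx_bounds d n p 0 0 ltac:(lra)). unfold yy. lra.
    - assert (Hs := u_step d n p m Hd Hn Hp Hc).
      assert (Hb := xx_bounds d n p (m * n) 0 ltac:(lra)). fold (yy d n p (m * n)) in Hb.
      assert (0 <= p ^ n * (1 - yy d n p (m * n)) ^ 2) by (apply Rmult_le_pos; [lra|simpl; nra]).
      destruct IHm as [IH|IH]; [left; lra|].
      destruct (Rlt_le_dec (1 - eps) (yy d n p (m * n))); [left; lra|right].
      rewrite S_INR.
      assert (eps * eps <= (1 - yy d n p (m * n)) ^ 2) by (simpl; nra).
      nra. }
  destruct (archimed_cor1 (p ^ n * (eps * eps)) ltac:(apply Rmult_lt_0_compat; [lra|nra])) as (M & HM & HM0).
  exists M. destruct (Hdisj M) as [H|H]; auto.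
  exfalso. assert (HI : 0 < INR M) by (apply lt_0_INR; lia).
  assert (1 < INR M * (p ^ n * (eps * eps))).
  { apply (Rmult_lt_compat_l (INR M)) in HM; auto. rewrite Rinv_r in HM; lra. }
  assert (Hb := xx_bounds d n p (M * n) 0 ltac:(lra)). unfold yy in H. lra.
Qed.

Lemma Gr_upper d n p k : (2 <= d)%nat -> (1 <= n)%nat -> 0 < p < 1 ->
  Gr d n p (S k) <= INR (Nn d n * S d) * (1 - yy d n p (k - n)).
Proof.
  intros Hd Hn Hp. unfold Gr.
  set (w := yy d n p (k - n)). assert (Hw : 0 <= w <= 1) by (apply xx_bounds; lra).
  assert (HB : 0 <= INR (Nn d n * S d) * (1 - w)) by (apply Rmult_le_pos; [apply pos_INR|lra]).
  rewrite <- (Eq_const n p (INR (Nn d n * S d) * (1 - w))).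
  apply Eq_mono; [lra|]. intros j Hj. destruct j as [|m]; [lra|].
  replace (1 - g d n p k m) with (xx d n p k m) by reflexivity.
  assert (Hx : w ^ (Nn d n) <= xx d n p k m).
  { eapply Rle_trans; [|apply inv2; lra].
    apply Rle_trans with (w ^ Nn d m).
    - apply pow_exp_mono; auto. apply Nn_mono; lia.
    - apply pow_incr. split; [lra|]. apply yy_mono; [lra|lia]. }
  assert (Hx2 : w ^ (Nn d n * S d) <= xx d n p k m ^ S d).
  { rewrite pow_mult. apply pow_incr. split; auto. apply pow_le; lra. }
  assert (Hb := bern1 (1 - w) (Nn d n * S d) ltac:(lra)).
  replace (1 - (1 - w)) with w in Hb by ring. lra.
Qed.

Lemma part2 d n p : (2 <= d)%nat -> (1 <= n)%nat -> 0 < p < 1 ->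
  2 * INR d - INR d * (p * INR d + 1 - p) ^ n >= 1 ->
  forall eps : R, 0 < eps -> exists N : nat, Gr d n p N < eps.
Proof.
  intros Hd Hn Hp Hc eps He.
  set (M := INR (Nn d n * S d)). assert (HM : 0 <= M) by apply pos_INR.
  set (eps1 := eps / (M + 1)).
  assert (He1 : 0 < eps1) by (apply Rdiv_lt_0_compat; lra).
  destruct (u_reach d n p eps1 Hd Hn Hp Hc He1) as (m & Hm).
  exists (S (m * n + n)).
  eapply Rle_lt_trans; [apply Gr_upper; auto|]. fold M.
  replace (m * n + n - n)%nat with (m * n)%nat by lia.
  apply Rle_lt_trans with (M * eps1).
  - apply Rmult_le_compat_l; lra.
  - unfold eps1. apply (Rmult_lt_reg_r (M + 1)); [lra|].
    replace (M * (eps / (M + 1)) * (M + 1)) with (M * eps) by (field; lra). nra.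
Qed.

Theorem mainTheorem9 (d n : nat) (p : R) :
  (2 <= d)%nat -> (1 <= n)%nat -> 0 < p < 1 ->
  ((p * INR d + 1 - p) ^ n - (1 - p) ^ n > 1 ->
     exists c : R, 0 < c /\ forall N : nat, c <= cyl_prob d n p (percolates d) N) /\
  (2 * INR d - INR d * (p * INR d + 1 - p) ^ n >= 1 ->
     forall eps : R, 0 < eps -> exists N : nat, cyl_prob d n p (percolates d) N < eps).
Proof.
  intros Hd Hn Hp. split.
  - intros H. destruct (part1 d n p Hd Hn Hp H) as (c & Hc & HN).
    exists c. split; auto. intros N. rewrite cyl_prob_Gr; auto.
  - intros H eps He. destruct (part2 d n p Hd Hn Hp H eps He) as (N & HN).
    exists N. rewrite cyl_prob_Gr; auto.
Qed.
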